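(* Let $\Gamma,\Delta$ be finitely generated groups with free continuous actions on compact metric spaces $Y$ and $X$ respectively, and let $f:Y\to X$ be a bijection (not necessarily continuous) inducing a quasi-isometry of warped cones, i.e. there are an index set $I$, maps $i\mapsto t_i$ and $i\mapsto\tau_i$ from $I$ onto $(0,\infty)$, and $C\ge1,A\ge0$ such that each $f:(t_iY,d_\Gamma)\to(\tau_iX,d_\Delta)$ is a $(C,A)$-quasi-isometry. Then there is a cocycle $\delta:\Gamma\times Y\to\Delta$ (i.e. $\delta(\gamma_2,\gamma_1y)\delta(\gamma_1,y)=\delta(\gamma_2\gamma_1,y)$) such that for each fixed $y$ the map $\gamma\mapsto\delta(\gamma,y)$ is a bijection $\Gamma\to\Delta$, and there are $C'\ge1$, $A'\ge0$ with $C'^{-1}|\gamma|-A'\le|\delta(\gamma,y)|\le C'|\gamma|+A'$ for all $\gamma,y$. In particular, $\Gamma$ and $\Delta$ are bijectively quasi-isometric.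
   Context: $|\cdot|$ is word length with respect to fixed finite symmetric generating sets. For a compact metric space $(Y,d)$ with a $\Gamma$-action and $t>0$, $tY$ is $Y$ with metric $td$ and $d_\Gamma$ is the largest metric on $tY$ with $d_\Gamma\le td$ and $d_\Gamma(y,sy)\le1$ for generators $s$. A $(C,A)$-quasi-isometry $g:Z\to W$ satisfies $C^{-1}d(z,z')-A\le d(g(z),g(z'))\le Cd(z,z')+A$ and the $A$-neighbourhood of $g(Z)$ equals $W$. *)

(* Defs.v *)
From HB Require Import structures.
From mathcomp Require Import all_boot all_order all_algebra.
From mathcomp Require Import all_classical all_reals.
From mathcomp Require Import Rstruct.
Set Implicit Arguments. Unset Strict Implicit. Unset Printing Implicit Defensive.
Import Order.TTheory GRing.Theory Num.Theory.
Local Open Scope ring_scope.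
Local Open Scope classical_set_scope.

Notation R := Rdefinitions.R.

Record group := Group {
  gcar :> Type;
  gmul : gcar -> gcar -> gcar;
  gone : gcar;
  ginv : gcar -> gcar;
  gmulA : forall x y z, gmul x (gmul y z) = gmul (gmul x y) z;
  gmul1 : forall x, gmul gone x = x;
  gmulV : forall x, gmul (ginv x) x = gone }.

Definition is_word (G : group) (S : seq G) (n : nat) (g : G) : Prop :=
  exists l : seq G, size l = n /\ List.Forall (fun s => List.In s S) l /\
                    foldr (@gmul G) (@gone G) l = g.

Definition fin_sym_gen (G : group) (S : seq G) : Prop :=
  (forall s, List.In s S -> List.In (ginv s) S) /\
  (forall g : G, exists n, is_word S n g).

Lemma wordlen_ex (G : group) (S : seq G) (g : G) :
  (exists n, is_word S n g) -> exists n, `[< is_word S n g >].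
Proof. by move=> [n h]; exists n; apply/asboolP. Qed.

(* word length |g| w.r.t. S: least n with g a product of n generators
   (0 if g is not in the generated subgroup, which never happens for a
   generating set) *)
Definition wordlen (G : group) (S : seq G) (g : G) : nat :=
  match pselect (exists n, is_word S n g) with
  | left h => ex_minn (wordlen_ex h)
  | right _ => 0%N
  end.

Definition is_action (G : group) (Y : Type) (act : G -> Y -> Y) : Prop :=
  (forall y, act (gone G) y = y) /\
  (forall g h y, act (gmul g h) y = act g (act h y)).

Definition free_action (G : group) (Y : Type) (act : G -> Y -> Y) : Prop :=
  forall g y, act g y = y -> g = gone G.

Definition is_metric (Y : Type) (d : Y -> Y -> R) : Prop :=
  (forall x y, 0 <= d x y) /\ (forall x y, d x y = 0 <-> x = y) /\
  (forall x y, d x y = d y x) /\ (forall x y z, d x z <= d x y + d y z).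

Definition dopen (Y : Type) (d : Y -> Y -> R) (U : set Y) : Prop :=
  forall x, U x -> exists2 e : R, 0 < e & forall y, d x y < e -> U y.

Definition dcompact (Y : Type) (d : Y -> Y -> R) : Prop :=
  forall (I : Type) (U : I -> set Y), (forall i, dopen d (U i)) ->
    (forall y, exists i, U i y) ->
    exists F : seq I, forall y, exists2 i, List.In i F & U i y.

Definition dcontinuous (Y : Type) (d : Y -> Y -> R) (h : Y -> Y) : Prop :=
  forall x (e : R), 0 < e -> exists2 r : R, 0 < r &
    forall y, d x y < r -> d (h x) (h y) < e.

Definition free_cont_action (G : group) (Y : Type) (d : Y -> Y -> R)
  (act : G -> Y -> Y) : Prop :=
  is_metric d /\ dcompact d /\ is_action act /\ free_action act /\
  (forall g, dcontinuous d (act g)).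

Definition warp_admissible (G : group) (S : seq G) (Y : Type)
  (act : G -> Y -> Y) (d : Y -> Y -> R) (t : R) (rho : Y -> Y -> R) : Prop :=
  is_metric rho /\ (forall x y, rho x y <= t * d x y) /\
  (forall s y, List.In s S -> rho y (act s y) <= 1).

(* d_Gamma on tY: the largest such metric (pointwise supremum) *)
Definition warped_dist (G : group) (S : seq G) (Y : Type)
  (act : G -> Y -> Y) (d : Y -> Y -> R) (t : R) (x y : Y) : R :=
  sup [set r : R | exists2 rho, warp_admissible S act d t rho & r = rho x y].

Definition quasi_isometry (Z W : Type) (dZ : Z -> Z -> R) (dW : W -> W -> R)
  (C A : R) (g : Z -> W) : Prop :=
  (forall z z', C^-1 * dZ z z' - A <= dW (g z) (g z') /\
                dW (g z) (g z') <= C * dZ z z' + A) /\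
  (forall w, exists z, dW (g z) w <= A).

(* Main.v *)
Require Import Defs.
From mathcomp Require Import all_boot all_order all_algebra.
From mathcomp Require Import all_classical all_reals.
From mathcomp Require Import Rstruct.
From mathcomp Require Import ring lra zify.
Import Order.TTheory GRing.Theory Num.Theory.
Set Implicit Arguments. Unset Strict Implicit.
Local Open Scope ring_scope.



Section GroupFacts.
Variable G : group.

Lemma gmulVr (x : G) : gmul x (ginv x) = gone G.
Proof.
have e : gmul x (ginv x) = gmul (gmul (ginv (ginv x)) (ginv x)) (gmul x (ginv x)).
  by rewrite gmulV gmul1.
rewrite e -gmulA (gmulA (ginv x) x) gmulV gmul1 gmulV //.
Qed.

Lemma gmulr1 (x : G) : gmul x (gone G) = x.
Proof. by rewrite -(gmulV x) gmulA gmulVr gmul1. Qed.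

Lemma foldr_gmul (l : seq G) h :
  gmul (foldr (@gmul G) (gone G) l) h = foldr (@gmul G) h l.
Proof. elim: l => [|s l IH] /=; first by rewrite gmul1. by rewrite -gmulA IH. Qed.

Lemma is_word_mul (S : seq G) m n g h :
  is_word S m g -> is_word S n h -> is_word S (m + n) (gmul g h).
Proof.
move=> [l1 [s1 [f1 e1]]] [l2 [s2 [f2 e2]]]; exists (l1 ++ l2); split.
  by rewrite size_cat s1 s2.
split; first by apply/List.Forall_app.
by rewrite foldr_cat -e1 -e2 foldr_gmul.
Qed.

Lemma is_word0 (S : seq G) : is_word S 0 (gone G).
Proof. by exists [::]. Qed.

Lemma wordlen_le (S : seq G) n g : is_word S n g -> (wordlen S g <= n)%N.
Proof.
move=> h; rewrite /wordlen; case: pselect => // hex.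
case: ex_minnP => m _ hm; apply: hm; exact/asboolP.
Qed.

Lemma wordlen_word (S : seq G) g : fin_sym_gen S -> is_word S (wordlen S g) g.
Proof.
move=> [_ hg]; rewrite /wordlen; case: pselect => [hex|]; last by move/(_ (hg g)).
by case: ex_minnP => m /asboolP.
Qed.

Lemma wordlen_mul (S : seq G) g h : fin_sym_gen S ->
  (wordlen S (gmul g h) <= wordlen S g + wordlen S h)%N.
Proof. move=> hS; apply: wordlen_le; apply: is_word_mul; exact: wordlen_word. Qed.

Lemma wordlen1 (S : seq G) : wordlen S (gone G) = 0%N.
Proof. by apply/eqP; rewrite -leqn0; apply: wordlen_le; exact: is_word0. Qed.

Fixpoint W (S : seq G) (n : nat) : list G :=
  match n with
  | 0%N => [:: gone G]
  | n'.+1 => List.flat_map (fun s => List.map (fun g => gmul s g) (W S n')) S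
  end.

Lemma W_word S n g : List.In g (W S n) -> is_word S n g.
Proof.
elim: n g => [|n IH] g /=.
  by case=> // <-; exact: is_word0.
move/List.in_flat_map=> [s [hs /List.in_map_iff [g' [<- hg']]]].
have [l [sl [fl el]]] := IH _ hg'.
exists (s :: l); split; first by rewrite /= sl.
by split; [constructor | rewrite /= el].
Qed.

Lemma W_step S k s g : List.In s S -> List.In g (W S k) -> List.In (gmul s g) (W S k.+1).
Proof.
move=> hs hg /=; apply/List.in_flat_map; exists s; split => //.
by apply/List.in_map_iff; exists g.
Qed.

Lemma act_inj (Y : Type) (act : G -> Y -> Y) g h y :
  is_action act -> free_action act -> act g y = act h y -> g = h.
Proof.
move=> [a1 aM] hf e.
have e2 : act (gmul (ginv h) g) y = y by rewrite aM e -aM gmulV a1.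
have := hf _ _ e2 => e3.
by rewrite -[g]gmul1 -(gmulVr h) -gmulA e3 gmulr1.
Qed.

End GroupFacts.



Definition rmin (a b : R) := if a <= b then a else b.
Definition rpos (u : R) := if 0 <= u then u else 0.

Lemma rmin_l a b : rmin a b <= a.
Proof. rewrite /rmin; case: (leP a b) => h; lra. Qed.
Lemma rmin_r a b : rmin a b <= b.
Proof. rewrite /rmin; case: (leP a b) => h; lra. Qed.
Lemma rmin_glb a b c : c <= a -> c <= b -> c <= rmin a b.
Proof. rewrite /rmin; case: (leP a b) => h; lra. Qed.
Lemma rmin_case a b : rmin a b = a \/ rmin a b = b.
Proof. rewrite /rmin; case: (leP a b) => h; tauto. Qed.
Lemma rpos_ge0 u : 0 <= rpos u.
Proof. rewrite /rpos; case: (leP 0 u) => h; lra. Qed.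
Lemma rpos_ge u : u <= rpos u.
Proof. rewrite /rpos; case: (leP 0 u) => h; lra. Qed.
Lemma rpos_neg u : u <= 0 -> rpos u = 0.
Proof. rewrite /rpos; case: (leP 0 u) => h; lra. Qed.
Lemma rpos_lip u v w : u <= v + w -> 0 <= w -> rpos u <= rpos v + w.
Proof. rewrite /rpos; case: (leP 0 u); case: (leP 0 v) => *; lra. Qed.

Section Metric.
Variables (Y : Type) (d : Y -> Y -> R) (t : R).
Hypothesis tpos : 0 < t.
Hypothesis dm : is_metric d.

Definition rhoF (phi : Y -> R) (x y : Y) : R := (`|phi x - phi y| + rmin (t * d x y) 1) / 2.

Lemma rhoF_metric (phi : Y -> R) : is_metric (rhoF phi).
Proof.
have [d0 [dE [dC dT]]] := dm.
have m0 x y : 0 <= rmin (t * d x y) 1.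
  apply: rmin_glb; last lra. apply: mulr_ge0. exact: ltW. exact: d0.
rewrite /rhoF; split; [|split; [|split]].
- move=> x y; have := m0 x y; have := normr_ge0 (phi x - phi y); lra.
- move=> x y; split.
    move=> h; have := m0 x y; have := normr_ge0 (phi x - phi y) => h1 h2.
    have hm : rmin (t * d x y) 1 = 0 by lra.
    have htd : t * d x y = 0.
      case: (rmin_case (t * d x y) 1) => hc; rewrite hc in hm => //.
      exfalso; move: hm; apply/eqP; exact: oner_neq0.
    apply/dE; move/eqP: htd; rewrite mulf_eq0 => /orP [/eqP ht|/eqP //].
    by move: tpos; rewrite ht ltxx.
  move=> ->; rewrite subrr normr0; have -> : d y y = 0 by apply/dE.
  by rewrite mulr0 /rmin ler01 addr0 mul0r.
- move=> x y; rewrite dC distrC //.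
- move=> x y z.
  have h1 := ler_distD (phi y) (phi x) (phi z).
  suff : rmin (t * d x z) 1 <= rmin (t * d x y) 1 + rmin (t * d y z) 1.
    rewrite (distrC (phi x)) (distrC (phi y)) in h1 *. lra.
  have := dT x y z; have := m0 x y; have := m0 y z.
  case: (rmin_case (t * d x y) 1) => ->; case: (rmin_case (t * d y z) 1) => ->;
    move=> *; try (have := rmin_r (t * d x z) 1; lra).
  have := rmin_l (t * d x z) 1; have := ler_wpM2l (ltW tpos) (dT x y z); rewrite mulrDr; lra.
Qed.

Variables (G : group) (S : seq G) (act : G -> Y -> Y).

Lemma rhoF_adm (phi : Y -> R) :
  (forall x y, phi x <= phi y + t * d x y) ->
  (forall s y, List.In s S -> phi (act s y) <= phi y + 1 /\ phi y <= phi (act s y) + 1) ->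
  warp_admissible S act d t (rhoF phi).
Proof.
move=> hl hs; split; first exact: rhoF_metric.
have [d0 [dE [dC dT]]] := dm.
split.
- move=> x y; rewrite /rhoF.
  have h1 : `|phi x - phi y| <= t * d x y.
    rewrite ler_norml; have := hl x y; have := hl y x; rewrite (dC y x) => ? ?; apply/andP; split; lra.
  have := rmin_l (t * d x y) 1; lra.
- move=> s y hsS; rewrite /rhoF; have [h1 h2] := hs s y hsS.
  have : `|phi y - phi (act s y)| <= 1 by rewrite ler_norml; apply/andP; split; lra.
  have := rmin_r (t * d y (act s y)) 1; lra.
Qed.

Lemma wd_ge rho x y : warp_admissible S act d t rho -> rho x y <= warped_dist S act d t x y.
Proof.
move=> ha; apply: ub_le_sup; last by exists rho.
exists (t * d x y) => r [rho' [_ [hle _]] ->]; exact: hle.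
Qed.

Lemma wd_gen s y : List.In s S -> warped_dist S act d t y (act s y) <= 1.
Proof.
move=> hs; apply: ge_sup.
  exists (rhoF (fun=> 0) y (act s y)); exists (rhoF (fun=> 0)) => //.
  apply: rhoF_adm => [x0 y0|s0 y0 _]; last by rewrite add0r ler01. 
  by rewrite add0r; apply: mulr_ge0; [exact: ltW | case: dm].
by move=> r [rho' [_ [_ hg]] ->]; exact: hg.
Qed.

End Metric.



Lemma list_min (T : Type) (L : list T) (P : T -> R -> Prop) :
  (forall x e e', 0 < e' -> e' <= e -> P x e -> P x e') ->
  (forall x, List.In x L -> exists2 e, 0 < e & P x e) ->
  exists2 e, 0 < e & forall x, List.In x L -> P x e.
Proof.
move=> hmono; elim: L => [|y L IH] hL; first by exists 1 => //; exact: ltr01.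
have [e1 e1p he1] := hL y (or_introl erefl).
have [e2 e2p he2] := IH (fun x hx => hL x (or_intror hx)).
have hp : 0 < rmin e1 e2 by rewrite /rmin; case: (leP e1 e2).
exists (rmin e1 e2) => // x [<-|hx].
  by apply: (hmono _ e1) => //; exact: rmin_l.
by apply: (hmono _ e2) => //; [exact: rmin_r | exact: he2].
Qed.

Section Fmin.
Variables (T : Type) (M : R).
Fixpoint fmin (F : T -> R) (L : list T) : R :=
  match L with nil => M | p :: L' => rmin (F p) (fmin F L') end.

Lemma fmin_le_M F L : fmin F L <= M.
Proof. elim: L => [|p L IH] /=; first exact: lexx. exact: le_trans (rmin_r _ _) IH. Qed.

Lemma fmin_le F L p : List.In p L -> fmin F L <= F p.
Proof.
elim: L => [|q L IH] //= [<-|h]; first exact: rmin_l.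
exact: le_trans (rmin_r _ _) (IH h).
Qed.

Lemma fmin_ge F L c : c <= M -> (forall p, List.In p L -> c <= F p) -> c <= fmin F L.
Proof.
move=> hM; elim: L => [|q L IH] //= h.
apply: rmin_glb; first exact: h (or_introl erefl).
apply: IH => p hp; exact: h (or_intror hp).
Qed.

Lemma fmin_case F L : fmin F L = M \/ exists p, List.In p L /\ fmin F L = F p.
Proof.
elim: L => [|q L IH] /=; first by left.
case: (rmin_case (F q) (fmin F L)) => ->; first by right; exists q; split => //; left.
case: IH => [->|[p [hp ->]]]; first by left.
by right; exists p; split => //; right.
Qed.

Lemma fmin_lip F F' L c : 0 <= c -> (forall p, F p <= F' p + c) ->
  fmin F L <= fmin F' L + c.
Proof.
move=> hc hF; elim: L => [|q L IH] /=; first lra.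
case: (rmin_case (F' q) (fmin F' L)) => ->.
  by apply: le_trans (rmin_l _ _) _; exact: hF.
by apply: le_trans (rmin_r _ _) _.
Qed.
End Fmin.



Section Key.
Variables (G : group) (S : seq G) (Y : Type) (d : Y -> Y -> R) (act : G -> Y -> Y).
Hypotheses (hS : fin_sym_gen S) (hm : is_metric d) (ha : is_action act)
  (hc : forall g, dcontinuous d (act g)).

Definition PL (N : nat) : list (nat * G) :=
  List.flat_map (fun k => List.map (fun g => (k, g)) (W S k)) (List.seq 0 N.+1).

Lemma in_PL N k g : List.In (k, g) (PL N) <-> (k <= N)%N /\ List.In g (W S k).
Proof.
rewrite /PL List.in_flat_map; split.
  move=> [k' [/List.in_seq hk' /List.in_map_iff [g' [[<- <-] hg]]]]; split => //.
  case: hk' => _ /= /PeanoNat.Nat.lt_succ_r /ssrnat.leP h. exact: h.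
move=> [hk hg]; exists k; split.
  apply/List.in_seq; split; first exact: PeanoNat.Nat.le_0_l.
  by apply/PeanoNat.Nat.lt_succ_r/ssrnat.leP.
by apply/List.in_map_iff; exists g.
Qed.

Lemma eta_ex k (a : Y) (e' : R) : 0 < e' -> exists2 eta, 0 < eta &
  forall g s z, List.In g (W S k) -> List.In s S -> d (act g a) z < eta ->
    d (act s (act g a)) (act s z) < e'.
Proof.
move=> he.
have hg : forall g, List.In g (W S k) -> exists2 eta, 0 < eta & forall s z, List.In s S ->
   d (act g a) z < eta -> d (act s (act g a)) (act s z) < e'.
  move=> g _.
  have [eta etap H] := @list_min _ S (fun s eta => forall z,
     d (act g a) z < eta -> d (act s (act g a)) (act s z) < e')
   (fun s e1 e2 h1 h2 h z hz => h z (lt_le_trans hz h2))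
   (fun s _ => hc s (act g a) he).
  by exists eta => // s z hs hz; exact: H.
have [eta etap H] := @list_min _ (W S k) (fun g eta => forall s z, List.In s S ->
   d (act g a) z < eta -> d (act s (act g a)) (act s z) < e')
  (fun g e1 e2 h1 h2 h s z hs hz => h s z hs (lt_le_trans hz h2)) hg.
by exists eta => // g s z hg' hs hz; exact: H.
Qed.


Lemma key (a b : Y) (N : nat) (Rb : R) : Rb * 2 < N.+1%:R ->
  (forall t, 0 < t -> warped_dist S act d t a b <= Rb) ->
  exists k g, (k <= N)%N /\ List.In g (W S k) /\ b = act g a.
Proof.
move=> hN hw; apply: contrapT => hno.
have hne : forall k g, (k <= N)%N -> List.In g (W S k) -> b <> act g a.
  by move=> k g hk hg he; apply: hno; exists k, g.
have [d0 [dE [dC dT]]] := hm.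
have [a1 aM] := ha.
have hpos : forall p, List.In p (PL N) -> exists2 e, 0 < e & e <= d b (act p.2 a).
  case=> k g /in_PL [hk hg]; exists (d b (act g a)) => //=.
  rewrite lt0r d0 andbT; apply/eqP => /dE; exact: hne hk hg.
have [e ep He] := @list_min _ (PL N) (fun p e => e <= d b (act p.2 a))
  (fun p e1 e2 _ h2 h => le_trans h2 h) hpos.
have heta : forall p : nat * R, exists eta : R, 0 < p.2 -> 0 < eta /\
    forall g s z, List.In g (W S p.1) -> List.In s S -> d (act g a) z < eta ->
      d (act s (act g a)) (act s z) < p.2.
  move=> [k e'] /=; case: (boolP (0 < e')) => h.
    by have [eta ? ?] := eta_ex k a h; exists eta.
  by exists 1.
have [eta Heta] := choice heta.
pose Eaux := fix Eaux (m : nat) : R :=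
  match m with 0%N => e | m'.+1 => rmin (eta ((N - m)%N, Eaux m' / 2)) (Eaux m') end.
have Eaux_pos : forall m, 0 < Eaux m.
  elim => [|m IH] //=.
  have hh : 0 < Eaux m / 2 by lra.
  have [h1 _] := Heta ((N - m.+1)%N, Eaux m / 2) hh.
  by rewrite /rmin; case: ifP.
have Eaux_le : forall m, Eaux m <= e.
  elim => [|m IH] /=; first exact: lexx.
  exact: le_trans (rmin_r _ _) IH.
have Eaux_dec : forall m j, Eaux (m + j)%N <= Eaux m.
  move=> m; elim => [|j IH]; first by rewrite addn0.
  rewrite addnS /=; exact: le_trans (rmin_r _ _) IH.
pose E k := Eaux (N - k)%N.
have E0le : forall k, (k <= N)%N -> E 0%N <= E k.
  move=> k hk; rewrite /E subn0.
  have -> : N = ((N - k) + k)%N by lia.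
  have -> : (N - k + k - k = N - k)%N by lia.
  exact: Eaux_dec.
have Estep : forall k, (k < N)%N -> E k <= eta (k, E k.+1 / 2).
  move=> k hk; rewrite /E.
  have -> : (N - k = (N - k.+1).+1)%N by lia.
  rewrite /=.
  have -> : (N - (N - k.+1).+1 = k)%N by lia.
  exact: rmin_l.
have P1 : forall k g s z, (k < N)%N -> List.In g (W S k) -> List.In s S ->
    d (act g a) z < E k -> d (act s (act g a)) (act s z) < E k.+1 / 2.
  move=> k g s z hk hg hs hz.
  have hh : 0 < E k.+1 / 2 by have := Eaux_pos (N - k.+1)%N; rewrite /E; lra.
  have [_ h2] := Heta (k, E k.+1 / 2) hh.
  apply: h2 => //; exact: lt_le_trans hz (Estep k hk).
pose M : R := N.+1%:R.
have Mp : 0 < M by rewrite ltr0n.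
have E0p : 0 < E 0%N by exact: Eaux_pos.
pose t := 2 * M / E 0%N.
have tp : 0 < t by rewrite /t; apply: divr_gt0 => //; apply: mulr_gt0 => //; lra.
have htE : t * E 0%N = 2 * M.
  have hE0 : E 0%N != 0 by rewrite gt_eqF.
  rewrite /t; field; exact: hE0.
have tEk : forall k, (k <= N)%N -> M <= t * (E k / 2).
  move=> k hk; have := E0le k hk => h.
  have := ler_wpM2l (ltW tp) h; lra.
pose term (p : nat * G) (x : Y) := p.1%:R + t * rpos (d x (act p.2 a) - E p.1 / 2).
pose phi x := fmin M (fun p => term p x) (PL N).
have phi_lip : forall x y, phi x <= phi y + t * d x y.
  move=> x y; apply: fmin_lip; first by rewrite mulr_ge0 // ltW.
  move=> [k g]; rewrite /term /=.
  have h1 : d x (act g a) - E k / 2 <= (d y (act g a) - E k / 2) + d x y.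
    have := dT x y (act g a); lra.
  have := ler_wpM2l (ltW tp) (rpos_lip h1 (d0 x y)); rewrite mulrDr; lra.
have phi_gen : forall s z, List.In s S -> phi (act s z) <= phi z + 1.
  move=> s z hs.
  have hMN : M = N%:R + 1 by rewrite /M natr1.
  case: (leP (N%:R) (phi z)) => hz.
    have := fmin_le_M M (fun p => term p (act s z)) (PL N); rewrite -/(phi _); lra.
  case: (fmin_case M (fun p => term p z) (PL N)) => [hM|[[k g] [hp hphi]]].
    rewrite -/(phi z) in hM; lra.
  have [hk hg] := (in_PL N k g).1 hp.
  rewrite -/(phi z) in hphi; rewrite hphi /term /= in hz.
  have hr := rpos_ge0 (d z (act g a) - E k / 2).
  have htr : 0 <= t * rpos (d z (act g a) - E k / 2) by rewrite mulr_ge0 // ltW.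
  have hkN : (k < N)%N by rewrite -(ltr_nat R); lra.
  have hd : d z (act g a) < E k.
    have hlt : rpos (d z (act g a) - E k / 2) < E k / 2.
      rewrite ltNge; apply/negP => hge.
      have := ler_wpM2l (ltW tp) hge; have := tEk k hk; have := ler0n R k; lra.
    have := rpos_ge (d z (act g a) - E k / 2); lra.
  have hd' : d (act g a) z < E k by rewrite dC.
  have hd2 := P1 k g s z hkN hg hs hd'.
  have hin : List.In (k.+1, gmul s g) (PL N).
    by apply/in_PL; split; [exact: hkN | exact: W_step].
  apply: le_trans (fmin_le _ _ hin) _; rewrite /term /=.
  rewrite aM rpos_neg; last by rewrite dC; lra.
  rewrite mulr0 addr0 -natr1; rewrite hphi /term /=; lra.
have phi_a : phi a <= 0.
  have hin : List.In (0%N, gone G) (PL N) by apply/in_PL; split => //=; left.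
  apply: le_trans (fmin_le _ _ hin) _; rewrite /term /= a1.
  have -> : d a a = 0 by apply/dE.
  rewrite rpos_neg ?mulr0 ?addr0 //.
  have := E0p; rewrite /E subn0 => h; lra.
have phi_b : M <= phi b.
  apply: fmin_ge => // [[k g]] /in_PL [hk hg]; rewrite /term /=.
  have h1 := He (k, g) ((in_PL N k g).2 (conj hk hg)); rewrite /= in h1.
  have h2 : E k <= e by exact: Eaux_le.
  have h3 := rpos_ge (d b (act g a) - E k / 2).
  have h4 : E k / 2 <= rpos (d b (act g a) - E k / 2) by lra.
  have := ler_wpM2l (ltW tp) h4; have := tEk k hk; have := ler0n R k; lra.
have adm : warp_admissible S act d t (rhoF d t phi).
  apply: rhoF_adm => // s y hs; split; first exact: phi_gen.
  have hs' : List.In (ginv s) S by case: hS => h _; exact: h.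
  have := phi_gen (ginv s) (act s y) hs'; rewrite -aM gmulV a1 //.
have := wd_ge a b adm; have := hw t tp; rewrite /rhoF.
have := rmin_l (t * d a b) 1; have := rmin_r (t * d a b) 1.
have hm0 : 0 <= rmin (t * d a b) 1 by apply: rmin_glb; [rewrite mulr_ge0 // ltW | exact: ler01].
have : phi b - phi a <= `|phi a - phi b| by rewrite distrC ler_norm.
lra.
Qed.

End Key.



Lemma transfer (G H : group) (SG : seq G) (SH : seq H) (Y X : Type)
  (actY : G -> Y -> Y) (actX : H -> X -> X) (h : Y -> X) (N : nat) :
  is_action actY -> is_action actX -> fin_sym_gen SH ->
  (forall y s, List.In s SG -> exists dl, (wordlen SH dl <= N)%N /\ h (actY s y) = actX dl (h y)) ->
  forall n g, is_word SG n g -> forall y, exists dl,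
    (wordlen SH dl <= N * n)%N /\ h (actY g y) = actX dl (h y).
Proof.
move=> [aY1 aYM] [aX1 aXM] hSH hgen n g [l [<- [hl <-]]] y.
elim: l hl => [|s l IH] hl /=.
  by exists (gone H); rewrite wordlen1 aY1 aX1.
have hs : List.In s SG by inversion hl.
have hl' : List.Forall (fun s => List.In s SG) l by inversion hl.
have [d1 [hd1 e1]] := IH hl'.
have [d2 [hd2 e2]] := hgen (actY (foldr (@gmul G) (gone G) l) y) s hs.
exists (gmul d2 d1); split.
  apply: leq_trans (wordlen_mul _ _ hSH) _; rewrite mulnS; exact: leq_add.
by rewrite aYM e2 e1 aXM.
Qed.

Lemma nat_bound (x : R) : 0 <= x -> exists N : nat, x * 2 < N.+1%:R.
Proof.
move=> hx; exists (Num.bound (x * 2)).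
have h := archi_boundP (x := x * 2) ltac:(lra).
apply: lt_le_trans h _; rewrite ler_nat; exact: leqnSn.
Qed.

Theorem corollary4p7
  (Gam Del : group) (SG : seq Gam) (SD : seq Del)
  (Y X : Type) (dY : Y -> Y -> R) (dX : X -> X -> R)
  (actY : Gam -> Y -> Y) (actX : Del -> X -> X) (f : Y -> X)
  (I : Type) (t tau : I -> R) (C A : R) :
  fin_sym_gen SG -> fin_sym_gen SD ->
  free_cont_action dY actY -> free_cont_action dX actX ->
  bijective f ->
  (forall i, 0 < t i) -> (forall r : R, 0 < r -> exists i, t i = r) ->
  (forall i, 0 < tau i) -> (forall r : R, 0 < r -> exists i, tau i = r) ->
  1 <= C -> 0 <= A ->
  (forall i, quasi_isometry (warped_dist SG actY dY (t i))
                            (warped_dist SD actX dX (tau i)) C A f) ->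
  exists delta : Gam -> Y -> Del,
    (forall g1 g2 y, gmul (delta g2 (actY g1 y)) (delta g1 y) = delta (gmul g2 g1) y) /\
    (forall y, bijective (fun g => delta g y)) /\
    exists C' A' : R, 1 <= C' /\ 0 <= A' /\
      forall g y,
        C'^-1 * (wordlen SG g)%:R - A' <= (wordlen SD (delta g y))%:R /\
        (wordlen SD (delta g y))%:R <= C' * (wordlen SG g)%:R + A'.
Proof.
move=> hSG hSD [dYm [_ [aY [frY cY]]]] [dXm [_ [aX [frX cX]]]] [finv fK fK']
  tpos tsurj taupos tausurj hC hA hqi.
have [aY1 aYM] := aY; have [aX1 aXM] := aX.
have Cp : 0 < C by lra.
have [N1 hN1] := nat_bound (x := C + A) ltac:(lra).
have [N2 hN2] := nat_bound (x := C * (1 + A)) ltac:(rewrite mulr_ge0 //; lra).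
have claim1 : forall y s, List.In s SG -> exists dl,
    (wordlen SD dl <= N1)%N /\ f (actY s y) = actX dl (f y).
  move=> y s hs.
  have hw : forall ta, 0 < ta -> warped_dist SD actX dX ta (f y) (f (actY s y)) <= C + A.
    move=> ta hta; have [i hi] := tausurj ta hta; rewrite -hi.
    have [_ hup] := (hqi i).1 y (actY s y).
    have h1 := wd_gen (tpos i) dYm actY y hs.
    apply: le_trans hup _; have := ler_wpM2l (ltW Cp) h1; lra.
  have [k [dl [hk [hdl he]]]] := key hSD dXm aX cX hN1 hw.
  exists dl; split => //; apply: leq_trans hk; apply: wordlen_le; exact: W_word.
have claim2 : forall x s, List.In s SD -> exists g,
    (wordlen SG g <= N2)%N /\ finv (actX s x) = actY g (finv x).
  move=> x s hs.
  have hw : forall ta, 0 < ta -> warped_dist SG actY dY ta (finv x) (finv (actX s x)) <= C * (1 + A).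
    move=> ta hta; have [i hi] := tsurj ta hta; rewrite -hi.
    have [hlo _] := (hqi i).1 (finv x) (finv (actX s x)).
    rewrite !fK' in hlo.
    have h1 := wd_gen (taupos i) dXm actX x hs.
    set w := warped_dist _ _ _ _ _ _ in hlo *.
    have h2 : C^-1 * w <= 1 + A by lra.
    have := ler_wpM2l (ltW Cp) h2; rewrite mulrA mulfV ?mul1r // gt_eqF //.
  have [k [g [hk [hg he]]]] := key hSG dYm aY cY hN2 hw.
  exists g; split => //; apply: leq_trans hk; apply: wordlen_le; exact: W_word.
have tr1 := transfer aY aX hSD claim1.
have tr2 := transfer aX aY hSG claim2.
have [D HD] := choice (P := fun (p : Gam * Y) dl =>
  (wordlen SD dl <= N1 * wordlen SG p.1)%N /\ f (actY p.1 p.2) = actX dl (f p.2))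
  ltac:(move=> [g y]; exact: tr1 (wordlen_word g hSG) y).
have [Gi HG] := choice (P := fun (p : Del * X) g =>
  (wordlen SG g <= N2 * wordlen SD p.1)%N /\ finv (actX p.1 p.2) = actY g (finv p.2))
  ltac:(move=> [dl x]; exact: tr2 (wordlen_word dl hSD) x).
have uniqX : forall d1 d2 x, actX d1 x = actX d2 x -> d1 = d2.
  by move=> d1 d2 x; apply: act_inj.
have uniqY : forall g1 g2 y, actY g1 y = actY g2 y -> g1 = g2.
  by move=> g1 g2 y; apply: act_inj.
pose delta g y := D (g, y).
have hinv : forall y dl, delta (Gi (dl, f y)) y = dl.
  move=> y dl; apply: (uniqX _ _ (f y)).
  have [_ e1] := HD (Gi (dl, f y), y); rewrite /delta -e1 /=.
  have [_ e2] := HG (dl, f y); rewrite /= fK in e2.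
  by rewrite -e2 fK'.
have hinv2 : forall y g, Gi (delta g y, f y) = g.
  move=> y g; apply: (uniqY _ _ y).
  have [_ e2] := HG (delta g y, f y); rewrite /= fK in e2.
  have [_ e1] := HD (g, y); rewrite /= in e1.
  by rewrite -e2 /delta -e1 fK.
exists delta; split; [|split].
- move=> g1 g2 y; apply: (uniqX _ _ (f y)).
  have [_ e1] := HD (g1, y); have [_ e2] := HD (g2, actY g1 y); have [_ e3] := HD (gmul g2 g1, y).
  rewrite /= in e1 e2 e3; rewrite /delta aXM -e1 -e2 -e3 aYM //.
- move=> y; exists (fun dl => Gi (dl, f y)) => [g|dl] /=; [exact: hinv2 | exact: hinv].
exists (maxn N1 N2).+1%:R, 0; split; first by rewrite ler1n.
split; first exact: lexx.
move=> g y; rewrite subr0 addr0.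
have hCp : 0 < (maxn N1 N2).+1%:R :> R by rewrite ltr0n.
have [hb1 _] := HD (g, y); rewrite /= in hb1.
have [hb2 _] := HG (delta g y, f y); rewrite /= hinv2 in hb2.
have hN1C : (N1 <= (maxn N1 N2).+1)%N by apply: leq_trans (leq_maxl _ _) (leqnSn _).
have hN2C : (N2 <= (maxn N1 N2).+1)%N by apply: leq_trans (leq_maxr _ _) (leqnSn _).
split.
- have h1 : (wordlen SG g <= (maxn N1 N2).+1 * wordlen SD (delta g y))%N.
    apply: leq_trans hb2 _; exact: leq_mul.
  move: h1; rewrite -(ler_nat R) natrM => h1.
  have hi : 0 <= ((maxn N1 N2).+1%:R : R)^-1 by rewrite invr_ge0 ltW.
  have := ler_wpM2l hi h1.
  by rewrite mulrA mulVf ?mul1r // gt_eqF.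
- have h1 : (wordlen SD (delta g y) <= (maxn N1 N2).+1 * wordlen SG g)%N.
    apply: leq_trans hb1 _; exact: leq_mul.
  by move: h1; rewrite -(ler_nat R) natrM.
Qed.
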